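(* Let $G=(V,E,L)$ be a graph with loops, $V=[n]$, $L=L^-\cup L^+$ with $L^+\neq\emptyset$. Let $\{i,i\}\in L^+$, let $M\subseteq N(i)$ with $i\in M$, $d:=|M|$. Let $S^i_M$ be the set of $(x,Y)$, $x\in\mathbb{R}^n$, $Y$ symmetric $n\times n$, for which there exist auxiliary values $z_S$ ($S\subseteq M$, $|S|\ge3$) such that, with $z_k:=x_k$ for $k\in M$, $z_{\{k,l\}}:=Y_{kl}$ for distinct $k,l\in M$, $z_{ii}:=Y_{ii}$, $z_\emptyset:=1$, $$z_{ii}\ \ge\sum_{J\subseteq M:\, i\in J}\frac{\big(\ell_d(J,M\setminus J)\big)^2}{\ell_{d-1}(J\setminus\{i\},M\setminus J)},\qquad \ell_d(J,M\setminus J)\ge 0\quad\forall J\subseteq M.$$ Then: (i) if $|M|=2$, then $\mathcal{C}^{\rm SDP+MC}_n\subseteq S^i_M$; (ii) if $|M|>2$, then $\mathcal{C}^{\rm SDP+MC+Tri}_n\not\subseteq S^i_M$.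
   Context: A graph with loops is $G=(V,E,L)$: $V$ finite node set, $E$ a set of unordered pairs of distinct nodes, $L$ a set of loops $\{i,i\}$ partitioned as $L=L^-\cup L^+$ (minus/plus loops). $N(i):=\{j\in V:\{i,j\}\in E\cup L\}$ (so $i\in N(i)$ for a loop $\{i,i\}$). For disjoint $J_1,J_2$ with $|J_1\cup J_2|=d$, $\ell_d(J_1,J_2):=\sum_{t\subseteq J_2}(-1)^{|t|}z_{J_1\cup t}$, where $z_{\{k\}}=z_k$. Each $u^2/v$ denotes the closed perspective: $u^2/v$ if $v>0$, $0$ if $u=v=0$, $+\infty$ if $u\neq0,v=0$. $\mathcal{C}^{\rm SDP}_n$ is the set of $(x,Y)$, $x\in[0,1]^n$, $Y$ symmetric $n\times n$, with $\begin{bmatrix}1&x^\top\\ x&Y\end{bmatrix}\succeq0$ and $Y_{kk}\le x_k$ for all $k$. $\mathcal{C}^{\rm SDP+MC}_n$ adds, for all $1\le k<l\le n$, the McCormick inequalities $Y_{kl}\ge0$, $Y_{kl}\ge x_k+x_l-1$, $Y_{kl}\le x_k$, $Y_{kl}\le x_l$. $\mathcal{C}^{\rm SDP+MC+Tri}_n$ further adds, for all $1\le k<l<m\le n$, the triangle inequalities $Y_{kl}+Y_{km}\le x_k+Y_{lm}$, $Y_{kl}+Y_{lm}\le x_l+Y_{km}$, $Y_{km}+Y_{lm}\le x_m+Y_{kl}$, $x_k+x_l+x_m-Y_{kl}-Y_{km}-Y_{lm}\le1$. *)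

(* Defs.v *)
From HB Require Import structures.
From mathcomp Require Import all_boot all_order all_algebra.
From mathcomp Require Import reals constructive_ereal.
Set Implicit Arguments. Unset Strict Implicit. Unset Printing Implicit Defensive.
Import Order.TTheory GRing.Theory Num.Theory.
Local Open Scope ring_scope.

Section Defs.
Variables (R : realType) (n : nat).

(* Graph with loops on V = 'I_n: edge relation e (symmetric, irreflexive:
   unordered pairs of distinct nodes) and loop sets Lm (minus) / Lp (plus). *)
Definition nbhd (e : rel 'I_n) (Lm Lp : {set 'I_n}) (i : 'I_n) : {set 'I_n} :=
  [set j | e i j || ((j == i) && (i \in Lm :|: Lp))].

Definition psd (m : nat) (A : 'M[R]_m) : Prop :=
  forall v : 'cV[R]_m, 0 <= (v^T *m A *m v) 0 0.

Definition lifted (x : 'cV[R]_n) (Y : 'M[R]_n) : 'M[R]_(1 + n) :=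
  block_mx (1%:M : 'M[R]_1) x^T x Y.

Definition C_SDP (x : 'cV[R]_n) (Y : 'M[R]_n) : Prop :=
  [/\ forall k, 0 <= x k 0 <= 1,
      Y^T = Y,
      psd (lifted x Y) &
      forall k, Y k k <= x k 0].

Definition McCormick (x : 'cV[R]_n) (Y : 'M[R]_n) : Prop :=
  forall k l : 'I_n, (k < l)%N ->
    [/\ 0 <= Y k l, x k 0 + x l 0 - 1 <= Y k l, Y k l <= x k 0 & Y k l <= x l 0].

Definition Triangle (x : 'cV[R]_n) (Y : 'M[R]_n) : Prop :=
  forall k l m : 'I_n, (k < l)%N -> (l < m)%N ->
    [/\ Y k l + Y k m <= x k 0 + Y l m,
        Y k l + Y l m <= x l 0 + Y k m,
        Y k m + Y l m <= x m 0 + Y k l &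
        x k 0 + x l 0 + x m 0 - Y k l - Y k m - Y l m <= 1].

Definition C_SDP_MC x Y := C_SDP x Y /\ McCormick x Y.
Definition C_SDP_MC_Tri x Y := [/\ C_SDP x Y, McCormick x Y & Triangle x Y].

Definition zval (x : 'cV[R]_n) (Y : 'M[R]_n) (w : {set 'I_n} -> R)
  (S : {set 'I_n}) : R :=
  match enum S with
  | [::] => 1
  | [:: k] => x k 0
  | [:: k; l] => Y k l
  | _ => w S
  end.

Definition ell (z : {set 'I_n} -> R) (J1 J2 : {set 'I_n}) : R :=
  \sum_(t in powerset J2) (-1) ^+ #|t| * z (J1 :|: t).

(* closed perspective u^2/v, as an extended real
   (+oo also for v < 0, which never occurs under the constraints ell >= 0) *)
Definition persp (u v : R) : \bar R :=
  if 0 < v then (u ^+ 2 / v)%:E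
  else if (u == 0) && (v == 0) then 0%E else +oo%E.

Definition S_set (i : 'I_n) (M : {set 'I_n}) (x : 'cV[R]_n) (Y : 'M[R]_n) : Prop :=
  Y^T = Y /\
  exists w : {set 'I_n} -> R,
    let z := zval x Y w in
    (forall J : {set 'I_n}, J \subset M -> 0 <= ell z J (M :\: J)) /\
    (\sum_(J in powerset M | i \in J)
        persp (ell z J (M :\: J)) (ell z (J :\ i) (M :\: J)) <= (Y i i)%:E)%E.

End Defs.

(* Main.v *)
Require Import Defs.
From HB Require Import structures.
From mathcomp Require Import all_boot all_order all_algebra.
From mathcomp Require Import reals constructive_ereal.
From mathcomp Require Import ring lra.
Import Order.TTheory GRing.Theory Num.Theory.
Local Open Scope ring_scope.
Set Implicit Arguments. Unset Strict Implicit.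


Section L.
Variables (R : realType) (n : nat).
Implicit Types (A B J S t : {set 'I_n}) (z : {set 'I_n} -> R).

Lemma sum_addi (F : {set 'I_n} -> R) (P : pred {set 'I_n}) (i : 'I_n) :
  \sum_(J : {set 'I_n} | (i \in J) && P J) F J = \sum_(J : {set 'I_n} | (i \notin J) && P (i |: J)) F (i |: J).
Proof.
rewrite (reindex_onto (fun J => i |: J) (fun J => J :\ i)); last first.
  by move=> J /andP[iJ _]; rewrite setD1K.
apply: eq_bigl => J; rewrite setU11 /=.
case iJ: (i \in J) => /=; last by rewrite setU1K ?iJ // eqxx andbT.
rewrite andbC; apply/negbTE; apply/negP => /andP[/eqP E _].
by move: iJ; rewrite -E setD11.
Qed.

Lemma ell_base z A : ell z A set0 = z A.
Proof.
rewrite /ell (big_pred1 set0); first by rewrite cards0 expr0 mul1r setU0.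
by move=> t; rewrite /= powersetE subset0.
Qed.

Lemma ell_rec z A B x : x \notin A -> x \notin B ->
  ell z A (x |: B) = ell z A B - ell z (x |: A) B.
Proof.
move=> xA xB; rewrite /ell (bigID (fun t => x \in t)) /=.
rewrite addrC; congr (_ + _).
  apply: eq_bigl => t; rewrite !powersetE.
  apply/idP/idP.
    case/andP=> tsub xt; apply/subsetP => y yt.
    have := subsetP tsub y yt; rewrite in_setU1; case/orP=> // /eqP E.
    by move: xt; rewrite -E yt.
  move=> tB; rewrite (subset_trans tB) ?subsetU1 //=.
  by apply/negP => /(subsetP tB); rewrite (negbTE xB).
rewrite -sumrN.
have -> : \sum_(t in powerset (x |: B) | x \in t) (-1) ^+ #|t| * z (A :|: t)
  = \sum_(t : {set 'I_n} | (x \in t) && (t \in powerset (x |: B))) (-1) ^+ #|t| * z (A :|: t).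
  by apply: eq_bigl => t; rewrite andbC.
rewrite sum_addi; apply: eq_big => t.
  rewrite !powersetE; apply/idP/idP.
    case/andP=> xt sub; apply/subsetP => y yt.
    have := subsetP sub y; rewrite !in_setU1 yt orbT => /(_ isT).
    by case/orP=> // /eqP E; move: xt; rewrite -E yt.
  move=> tB; have xt : x \notin t by apply/negP => /(subsetP tB); rewrite (negbTE xB).
  by rewrite xt /= setUS.
case/andP=> xt _; rewrite cardsU1 xt exprS mulN1r mulNr; congr (- (_ * z _)).
by rewrite setUA [A :|: _]setUC.
Qed.


Lemma marg z : forall k M S, #|M :\: S| = k -> S \subset M ->
  \sum_(J in powerset M | S \subset J) ell z J (M :\: J) = z S.
Proof.
elim=> [|k IH] M S.
  move/eqP; rewrite cards_eq0 setD_eq0 => MS SM.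
  have EM : M = S by apply/eqP; rewrite eqEsubset MS SM.
  subst M; rewrite (big_pred1 S); first by rewrite setDv ell_base.
  by move=> J; rewrite /= powersetE eqEsubset.
move=> cM SM.
have [x xMS] : exists x, x \in M :\: S.
  by apply/set0Pn; rewrite -card_gt0 cM.
move: (xMS); rewrite inE => /andP[xS xM].

have cMx : #|(M :\ x) :\: S| = k.
  have : M :\: S = x |: ((M :\ x) :\: S).
    by apply/setP => y; rewrite !inE; case: (y =P x) => // ->; rewrite xS xM.
  move=> E; move: cM; rewrite E cardsU1 !inE eqxx /= andbF add1n. by case.
have SMx : S \subset (M :\ x).
  apply/subsetP => y yS; rewrite !inE (subsetP SM) // andbT.
  by apply/eqP => E; move: xS; rewrite -E yS.
rewrite -(IH (M :\ x) S cMx SMx) (bigID (fun J => x \in J)) /=.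
have E1 : forall J : {set 'I_n}, x \notin J -> M :\: J = x |: ((M :\ x) :\: J).
  move=> J xJ; apply/setP => y; rewrite !inE.
  by case: (y =P x) => [->|] //=; rewrite xM (negbTE xJ).
have E2 : forall J : {set 'I_n}, x \notin J -> M :\: (x |: J) = (M :\ x) :\: J.
  move=> J xJ; apply/setP => y; rewrite !inE.
  by case: (y =P x) => [->|] //=; rewrite andbF.
have E3 : forall J : {set 'I_n}, x \notin J ->
   ((J \in powerset M) && (S \subset J)) = ((J \in powerset (M :\ x)) && (S \subset J)).
  move=> J xJ; rewrite !powersetE; congr (_ && _).
  apply/idP/idP => sub; apply/subsetP => y yJ.
    rewrite !inE (subsetP sub) // andbT; apply/eqP => E; move: xJ; rewrite -E yJ //.
  by move: (subsetP sub y yJ); rewrite inE => /andP[].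
have E4 : forall J : {set 'I_n}, x \notin J ->
   ((x |: J \in powerset M) && (S \subset x |: J)) = ((J \in powerset (M :\ x)) && (S \subset J)).
  move=> J xJ; rewrite !powersetE subUset sub1set xM /=; congr (_ && _).
    apply/idP/idP => sub; apply/subsetP => y yJ.
      rewrite !inE (subsetP sub) // andbT; apply/eqP => E; move: xJ; rewrite -E yJ //.
    by move: (subsetP sub y yJ); rewrite inE => /andP[].
  apply/idP/idP => sub; apply/subsetP => y yS.
    by case/setU1P: (subsetP sub y yS) => [E|//]; move: xS; rewrite -E yS.
  by apply/setU1P; right; exact: (subsetP sub).
have -> : \sum_(i | (i \in powerset M) && (S \subset i) && (x \in i)) ell z i (M :\: i) =
   \sum_(J : {set 'I_n} | (x \in J) && ((J \in powerset M) && (S \subset J))) ell z J (M :\: J).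
  by apply: eq_bigl => J; rewrite andbC.
rewrite sum_addi.
have -> : \sum_(i | (i \in powerset M) && (S \subset i) && (x \notin i)) ell z i (M :\: i) =
   \sum_(J : {set 'I_n} | (x \notin J) && ((J \in powerset (M :\ x)) && (S \subset J)))
      (ell z J ((M :\ x) :\: J) - ell z (x |: J) ((M :\ x) :\: J)).
  rewrite [LHS](eq_bigl (fun J : {set 'I_n} => (x \notin J) && ((J \in powerset M) && (S \subset J)))); last first.
    by move=> J; rewrite andbC.
  apply: eq_big => J; first by case xJ: (x \in J) => //=; rewrite E3 ?xJ.
  case/andP=> xJ /andP[]; rewrite powersetE => JMx _.
  rewrite E1 // ell_rec //; last by rewrite !inE eqxx /= andbF.
rewrite [X in X + _ = _](eq_bigl (fun J : {set 'I_n} => (x \notin J) && ((J \in powerset (M :\ x)) && (S \subset J))) _); last first.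
  by move=> J; case xJ: (x \in J) => //=; rewrite E4 ?xJ.
rewrite -big_split /= [RHS](bigID (fun J => x \in J)) /=.
rewrite [X in _ = _ + X](eq_bigl (fun J : {set 'I_n} => (x \notin J) && ((J \in powerset (M :\ x)) && (S \subset J)))); last first.
  by move=> J; rewrite andbC.
rewrite [X in _ = X + _]big1 ?add0r; last first.
  move=> J /andP[/andP[]]; rewrite powersetE => JMx _ xJ.
  by move: (subsetP JMx x xJ); rewrite !inE eqxx.
apply: eq_bigr => J /andP[xJ _]; rewrite E2 //; ring.
Qed.


Lemma quadD m (v : 'cV[R]_m) (A B : 'M[R]_m) :
  (v^T *m (A + B) *m v) 0 0 = (v^T *m A *m v) 0 0 + (v^T *m B *m v) 0 0.
Proof. by rewrite mulmxDr mulmxDl mxE. Qed.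
Lemma quadB m (v : 'cV[R]_m) (A B : 'M[R]_m) :
  (v^T *m (A - B) *m v) 0 0 = (v^T *m A *m v) 0 0 - (v^T *m B *m v) 0 0.
Proof. by rewrite mulmxBr mulmxBl !mxE. Qed.
Lemma quadZ m (v : 'cV[R]_m) a (A : 'M[R]_m) :
  (v^T *m (a *: A) *m v) 0 0 = a * (v^T *m A *m v) 0 0.
Proof. by rewrite -scalemxAr -scalemxAl mxE. Qed.
Lemma quad1 m (v w : 'cV[R]_m) :
  (v^T *m (w *m w^T) *m v) 0 0 = ((v^T *m w) 0 0) ^+ 2.
Proof.
rewrite mulmxA -mulmxA -{2}[v]trmxK -trmx_mul mxE big_ord1 !mxE expr2.
by apply: congr2; apply: eq_bigr => r _; rewrite !mxE.
Qed.


Lemma zval0 (x : 'cV[R]_n) (Y : 'M[R]_n) (w : {set 'I_n} -> R) : zval x Y w set0 = 1 :> R.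
Proof. by rewrite /zval enum_set0. Qed.
Lemma zval1 (x : 'cV[R]_n) (Y : 'M[R]_n) (w : {set 'I_n} -> R) u : zval x Y w [set u] = x u 0 :> R.
Proof. by rewrite /zval enum_set1. Qed.
Lemma zval2 (x : 'cV[R]_n) (Y : 'M[R]_n) (w : {set 'I_n} -> R) u v : Y^T = Y -> u != v ->
  zval x Y w [set u; v] = Y u v.
Proof.
move=> Ys uv; rewrite /zval.
have Ysym : forall a b, Y a b = Y b a by move=> a b; rewrite -{1}Ys mxE.
have sz : size (enum [set u; v]) = 2 by rewrite -cardE cards2 uv.
have un := enum_uniq [set u; v].
have mem := mem_enum [set u; v].
move: sz un mem; case: (enum [set u; v]) => [|a [|b [|c s]]] // _ /= /andP[].
rewrite inE => ab _ mem.
have ha : a \in [set u; v] by rewrite -(mem a) inE eqxx.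
have hb : b \in [set u; v] by rewrite -(mem b) !inE eqxx orbT.
case/set2P: ha => Ea; case/set2P: hb => Eb; subst a b => //; try by rewrite eqxx in ab.
Qed.

Lemma persp_ge0 (u v : R) : (0 <= persp u v)%E.
Proof.
rewrite /persp; case: ifP => v0; first by rewrite lee_fin divr_ge0 ?sqr_ge0 ?ltW.
by case: ifP => _ //; rewrite leey.
Qed.

Lemma persp_ge (u v : R) : (((2 * u - v)%:E) <= persp u v)%E.
Proof.
rewrite /persp; case: ifP => v0.
  rewrite lee_fin -subr_ge0.
  have -> : u ^+ 2 / v - (2 * u - v) = (u - v) ^+ 2 / v.
    by field; apply/negP => /eqP v00; move: v0; rewrite v00 ltxx.
  by rewrite divr_ge0 ?sqr_ge0 ?ltW.
case: ifP => [/andP[/eqP -> /eqP ->]|_]; last by rewrite leey.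
by rewrite lee_fin; lra.
Qed.

Lemma sum_ind (M : {set 'I_n}) (b : pred {set 'I_n}) (F : {set 'I_n} -> R) :
  \sum_(J in powerset M) (b J)%:R * F J = \sum_(J in powerset M | b J) F J.
Proof.
rewrite [RHS]big_mkcondr; apply: eq_bigr => J _.
by case: (b J); rewrite ?mul1r ?mul0r.
Qed.

End L.


Section P2.
Variables (R : realType) (n : nat) (i j k : 'I_n).
Hypotheses (hij : i != j) (hik : i != k) (hjk : j != k).

Definition bv (b : 'I_n -> bool) : 'cV[R]_n := \col_r (b r)%:R.
Definition b2 r := r == j.
Definition b3 r := r == k.
Definition b4 r := [|| r == i, r == j | r == k].
Definition bi r := r == i.
Definition Xc : 'cV[R]_n := 4^-1 *: (bv b2 + bv b3 + bv b4).
Definition Yc : 'M[R]_n := 4^-1 *: (bv b2 *m (bv b2)^T + bv b3 *m (bv b3)^T + bv b4 *m (bv b4)^T)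
   - 20^-1 *: (bv bi *m (bv bi)^T).

Lemma entD m p (A B : 'M[R]_(m,p)) r s : (A + B) r s = A r s + B r s.
Proof. by rewrite mxE. Qed.
Lemma entN m p (A : 'M[R]_(m,p)) r s : (- A) r s = - A r s.
Proof. by rewrite mxE. Qed.
Lemma entZ m p a (A : 'M[R]_(m,p)) r s : (a *: A) r s = a * A r s.
Proof. by rewrite mxE. Qed.

Lemma ww_entry m (w : 'cV[R]_m) r s : (w *m w^T) r s = w r 0 * w s 0.
Proof. by rewrite mxE big_ord1 mxE. Qed.

Lemma Xc_entry r : Xc r 0 = 4^-1 * ((b2 r)%:R + (b3 r)%:R + (b4 r)%:R).
Proof. by rewrite !mxE. Qed.

Lemma Yc_entry r s : Yc r s = 4^-1 * ((b2 r)%:R * (b2 s)%:R + (b3 r)%:R * (b3 s)%:R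
   + (b4 r)%:R * (b4 s)%:R) - 20^-1 * ((bi r)%:R * (bi s)%:R).
Proof. by rewrite /Yc !(entD, entN, entZ) !ww_entry !mxE. Qed.


Definition Wc (w : 'cV[R]_n) : 'cV[R]_(1 + n) := col_mx (1%:M : 'M[R]_1) w.
Definition Ec : 'cV[R]_(1 + n) := col_mx (0 : 'M[R]_1) (bv bi).

Lemma lifted_dec : lifted Xc Yc =
  4^-1 *: (Wc 0 *m (Wc 0)^T + Wc (bv b2) *m (Wc (bv b2))^T + Wc (bv b3) *m (Wc (bv b3))^T
           + Wc (bv b4) *m (Wc (bv b4))^T) - 20^-1 *: (Ec *m Ec^T).
Proof.
apply/matrixP => r s; rewrite !(entD, entN, entZ) !ww_entry /Wc /Ec /lifted.
case: (split_ordP r) => r' ->; case: (split_ordP s) => s' ->;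
  rewrite ?block_mxEul ?block_mxEur ?block_mxEdl ?block_mxEdr ?col_mxEu ?col_mxEd
          ?Xc_entry ?Yc_entry !mxE ?Xc_entry ?Yc_entry ?ord1 /=.
- lra.
- ring.
- ring.
- ring.
Qed.

Lemma E_dec : Ec = Wc (bv b4) - Wc (bv b2) - Wc (bv b3) + Wc 0.
Proof.
apply/matrixP => r s; rewrite !(entD, entN) /Wc /Ec.
case: (split_ordP r) => r' ->; rewrite ?col_mxEu ?col_mxEd !mxE ?ord1 /=.
- lra.
- rewrite /bi /b2 /b3 /b4; case: (r' =P i) => [->|ri]; first by rewrite (negbTE hij) (negbTE hik) /=; ring.
  case: (r' =P j) => [->|rj]; first by rewrite (negbTE hjk) /=; ring.
  by case: (r' == k) => /=; ring.
Qed.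

Lemma psd_lifted : psd (lifted Xc Yc).
Proof.
move=> v; rewrite lifted_dec quadB !quadZ !quadD !quad1.
have -> : (v^T *m Ec) 0 0 = (v^T *m Wc (bv b4)) 0 0 - (v^T *m Wc (bv b2)) 0 0
   - (v^T *m Wc (bv b3)) 0 0 + (v^T *m Wc 0) 0 0.
  by rewrite E_dec !(mulmxDr, mulmxN) !(entD, entN).
set a := (v^T *m Wc 0) 0 0; set b := (v^T *m Wc (bv b2)) 0 0.
set c := (v^T *m Wc (bv b3)) 0 0; set d := (v^T *m Wc (bv b4)) 0 0.
have h : (d - b - c + a) ^+ 2 <= 4 * (a ^+ 2 + b ^+ 2 + c ^+ 2 + d ^+ 2).
  have e : 4 * (a ^+ 2 + b ^+ 2 + c ^+ 2 + d ^+ 2) - (d - b - c + a) ^+ 2 =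
    (a + b) ^+ 2 + (a + c) ^+ 2 + (a - d) ^+ 2 + (b - c) ^+ 2 + (b + d) ^+ 2 + (c + d) ^+ 2 by ring.
  rewrite -subr_ge0 e; by rewrite ?addr_ge0 ?sqr_ge0.
have h2 : 0 <= a ^+ 2 + b ^+ 2 + c ^+ 2 + d ^+ 2 by by rewrite ?addr_ge0 ?sqr_ge0.
lra.
Qed.


Lemma tri_pt (a b c : bool) :
  [/\ (a%:R * b%:R + a%:R * c%:R <= a%:R + b%:R * c%:R :> R),
      (a%:R * b%:R + b%:R * c%:R <= b%:R + a%:R * c%:R :> R),
      (a%:R * c%:R + b%:R * c%:R <= c%:R + a%:R * b%:R :> R) &
      (a%:R + b%:R + c%:R - a%:R * b%:R - a%:R * c%:R - b%:R * c%:R <= 1 :> R)].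
Proof. by case: a; case: b; case: c; split; rewrite /= ?mul1r ?mul0r ?mulr1 ?mulr0; lra. Qed.

Lemma mc_pt (a b : bool) :
  [/\ (0 <= a%:R * b%:R :> R), (a%:R + b%:R - 1 <= a%:R * b%:R :> R),
      (a%:R * b%:R <= a%:R :> R) & (a%:R * b%:R <= b%:R :> R)].
Proof. by case: a; case: b; split; rewrite /= ?mul1r ?mul0r ?mulr1 ?mulr0; lra. Qed.

Lemma bi0 r s : r != s -> (bi r)%:R * (bi s)%:R = 0 :> R.
Proof.
rewrite /bi; case: (r =P i) => [->|]; last by rewrite mul0r.
by case: (s =P i) => [->|]; rewrite ?eqxx ?mulr0.
Qed.

Lemma b01 (a : bool) : 0 <= a%:R :> R /\ a%:R <= 1 :> R /\ a%:R * a%:R = a%:R :> R.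
Proof. by case: a => /=; rewrite ?mul1r ?mul0r; split; lra. Qed.

Lemma Ctri : C_SDP_MC_Tri Xc Yc.
Proof.
split; first split.
- move=> r; rewrite Xc_entry.
  have [? [? _]] := b01 (b2 r); have [? [? _]] := b01 (b3 r); have [? [? _]] := b01 (b4 r).
  lra.
- by apply/matrixP => r s; rewrite mxE !Yc_entry; ring.
- exact: psd_lifted.
- move=> r; rewrite Xc_entry Yc_entry.
  have [? [? e2]] := b01 (b2 r); have [? [? e3]] := b01 (b3 r); have [? [? e4]] := b01 (b4 r).
  have [? [? ei]] := b01 (bi r).
  rewrite e2 e3 e4 ei; lra.
- move=> r s rs; have rs' : r != s by rewrite neq_ltn rs.
  rewrite !Xc_entry !Yc_entry bi0 //.
  have [? ? ? ?] := mc_pt (b2 r) (b2 s); have [? ? ? ?] := mc_pt (b3 r) (b3 s).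
  have [? ? ? ?] := mc_pt (b4 r) (b4 s).
  split; lra.
- move=> r s t rs st.
  have rs' : r != s by rewrite neq_ltn rs.
  have st' : s != t by rewrite neq_ltn st.
  have rt' : r != t by rewrite neq_ltn (ltn_trans rs st).
  rewrite !Xc_entry !Yc_entry !bi0 //.
  have [? ? ? ?] := tri_pt (b2 r) (b2 s) (b2 t); have [? ? ? ?] := tri_pt (b3 r) (b3 s) (b3 t).
  have [? ? ? ?] := tri_pt (b4 r) (b4 s) (b4 t).
  split; lra.
Qed.


Lemma notS (M : {set 'I_n}) : i \in M -> j \in M -> k \in M -> ~ S_set i M Xc Yc.
Proof.
move=> iM jM kM [Ysym [w []]].
set z := zval Xc Yc w => nonneg hsum.
set p := fun J => ell z J (M :\: J).
pose g (J : {set 'I_n}) := if (j \in J) && (k \in J) then p J - p (J :\ i) else 0.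
have hq : forall J : {set 'I_n}, J \subset M -> i \in J ->
    ell z (J :\ i) (M :\: J) = p J + p (J :\ i).
  move=> J JM iJ; rewrite /p.
  have -> : M :\: (J :\ i) = i |: (M :\: J).
    apply/setP => y; rewrite !inE; case: (y =P i) => [->|] //=; by rewrite iM iJ.
  rewrite ell_rec ?setD1K //; first ring.
    by rewrite !inE eqxx.
  by rewrite !inE iJ.
have Yii : Yc i i = 5^-1.
  rewrite Yc_entry /b2 /b3 /b4 /bi eqxx (negbTE hij) (negbTE hik) /=; lra.
have h1' : ((\sum_(J in powerset M | i \in J) (g J)%:E) <= (Yc i i)%:E)%E.
  apply: le_trans hsum; apply: lee_sum => J /andP[].
  rewrite powersetE => JM iJ; rewrite /g; case: ifP => _; last exact: persp_ge0.
  apply: le_trans (persp_ge _ _); rewrite lee_fin hq //.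
  rewrite /p; lra.
have h1 : \sum_(J in powerset M | i \in J) g J <= 5^-1.
  by rewrite -Yii; move: h1'; rewrite sumEFin lee_fin.
have h2 : \sum_(J in powerset M | i \in J) g J =
   \sum_(J in powerset M) ([&& i \in J, j \in J & k \in J])%:R * p J
 - \sum_(J in powerset M) ([&& i \notin J, j \in J & k \in J])%:R * p J.
  rewrite !sum_ind.
  rewrite (bigID (fun J : {set 'I_n} => (j \in J) && (k \in J))) /= [X in _ + X]big1 ?addr0; last first.
    by move=> J /andP[_ /negbTE]; rewrite /g => ->.
  rewrite (eq_bigr (fun J : {set 'I_n} => p J - p (J :\ i))); last by move=> J /andP[_]; rewrite /g => ->.
  rewrite sumrB; congr (_ - _).
    by apply: eq_bigl => J; case: (J \in powerset M); case: (i \in J); case: (j \in J); case: (k \in J).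
  rewrite [LHS](eq_bigl (fun J : {set 'I_n} => (i \in J) && ((J \in powerset M) && (j \in J) && (k \in J)))); last first.
    by move=> J; case: (J \in powerset M); case: (i \in J); case: (j \in J); case: (k \in J).
  rewrite sum_addi; apply: eq_big => J.
    rewrite !powersetE subUset sub1set iM /= !in_setU1 ![_ == i]eq_sym (negbTE hij) (negbTE hik) /=.
    by case: (J \subset M); case: (i \in J); case: (j \in J); case: (k \in J).
  by case/andP=> iJ _; rewrite setU1K.
have hD : 0 <= \sum_(J in powerset M) ([&& i \in J, j \notin J & k \notin J])%:R * p J.
  apply: sumr_ge0 => J; rewrite powersetE => JM; apply: mulr_ge0 (nonneg J JM).
  exact: ler0n.
have hE : \sum_(J in powerset M) ([&& i \in J, j \in J & k \in J])%:R * p J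
 - \sum_(J in powerset M) ([&& i \notin J, j \in J & k \in J])%:R * p J
 - 2 * \sum_(J in powerset M) ([&& i \in J, j \notin J & k \notin J])%:R * p J
 = - 2 * \sum_(J in powerset M) ([set i] \subset J)%:R * p J
   + 2 * \sum_(J in powerset M) ([set i; j] \subset J)%:R * p J
   + 2 * \sum_(J in powerset M) ([set i; k] \subset J)%:R * p J
   - \sum_(J in powerset M) ([set j; k] \subset J)%:R * p J.
  rewrite !mulr_sumr -!sumrB -!big_split /= -!sumrB.
  apply: eq_bigr => J _; rewrite !subUset !sub1set.
  by case: (i \in J); case: (j \in J); case: (k \in J); rewrite /=; ring.
have mg : forall S : {set 'I_n}, S \subset M -> \sum_(J in powerset M) (S \subset J)%:R * p J = z S.
  by move=> S SM; rewrite sum_ind (@marg _ _ z _ M S erefl SM).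
have nji : (j == i) = false by rewrite eq_sym (negbTE hij).
have nki : (k == i) = false by rewrite eq_sym (negbTE hik).
have nkj : (k == j) = false by rewrite eq_sym (negbTE hjk).
have m1 : \sum_(J in powerset M) ([set i] \subset J)%:R * p J = 4^-1.
  rewrite mg ?sub1set // /z zval1 Xc_entry /b2 /b3 /b4 eqxx (negbTE hij) (negbTE hik) /=; lra.
have m2 : \sum_(J in powerset M) ([set i; j] \subset J)%:R * p J = 4^-1.
  rewrite mg ?subUset ?sub1set ?iM ?jM // /z zval2 //.
  rewrite Yc_entry /b2 /b3 /b4 /bi !eqxx (negbTE hij) (negbTE hik) (negbTE hjk) nji /= ?orbT; lra.
have m3 : \sum_(J in powerset M) ([set i; k] \subset J)%:R * p J = 4^-1.
  rewrite mg ?subUset ?sub1set ?iM ?kM // /z zval2 //.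
  rewrite Yc_entry /b2 /b3 /b4 /bi !eqxx (negbTE hij) (negbTE hik) nkj nki /= ?orbT; lra.
have m4 : \sum_(J in powerset M) ([set j; k] \subset J)%:R * p J = 4^-1.
  rewrite mg ?subUset ?sub1set ?jM ?kM // /z zval2 //.
  rewrite Yc_entry /b2 /b3 /b4 /bi !eqxx (negbTE hjk) nkj nki nji /= ?orbT; lra.
rewrite m1 m2 m3 m4 in hE; rewrite h2 in h1.
clear h1' hsum Ysym nonneg hq mg; lra.
Qed.

End P2.


Section P1.
Variables (R : realType) (n : nat).

Lemma quad_sum m (v : 'cV[R]_m) (L : 'M[R]_m) :
  (v^T *m L *m v) 0 0 = \sum_r \sum_s v r 0 * L r s * v s 0.
Proof.
rewrite mxE exchange_big /=; apply: eq_bigr => s _.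
rewrite mxE big_distrl /=; apply: eq_bigr => r _; by rewrite mxE.
Qed.

Lemma sparse (i j : 'I_n) (b : R) (F : 'I_n -> R) :
  \sum_r ((r == i)%:R + b * (r == j)%:R) * F r = F i + b * F j.
Proof.
under eq_bigr do rewrite mulrDl.
rewrite big_split /=; congr (_ + _).
  rewrite (bigD1 i) //= eqxx mul1r big1 ?addr0 // => r /negbTE ->; by rewrite mul0r.
rewrite (bigD1 j) //= eqxx mulr1 big1 ?addr0 // => r /negbTE ->; by rewrite mulr0 mul0r.
Qed.

Lemma psd_use (x : 'cV[R]_n) (Y : 'M[R]_n) (i j : 'I_n) (a b : R) :
  psd (lifted x Y) ->
  0 <= a * a + 2 * a * (x i 0 + b * x j 0) + (Y i i + b * Y j i) + b * (Y i j + b * Y j j).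
Proof.
move=> H.
pose u : 'cV[R]_n := \col_r ((r == i)%:R + b * (r == j)%:R).
have := H (col_mx (a%:M) u); rewrite quad_sum big_split_ord big_ord1 /=.
rewrite big_split_ord big_ord1 /=.
under [X in _ <= _ + X]eq_bigr do rewrite big_split_ord big_ord1 /=.
rewrite big_split /= /lifted.
set B := block_mx _ _ _ _.
have e1 : B (lshift n ord0) (lshift n ord0) = 1 by rewrite (block_mxEul (1%:M : 'M[R]_1) x^T x Y) mxE.
have e2 : forall r, B (lshift n ord0) (rshift 1 r) = x r 0 by move=> r; rewrite (block_mxEur (1%:M : 'M[R]_1) x^T x Y) mxE.
have e3 : forall r, B (rshift 1 r) (lshift n ord0) = x r 0 by move=> r; rewrite (block_mxEdl (1%:M : 'M[R]_1) x^T x Y).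
have e4 : forall r s, B (rshift 1 r) (rshift 1 s) = Y r s by move=> r s; rewrite (block_mxEdr (1%:M : 'M[R]_1) x^T x Y).
set V := col_mx _ _.
have f1 : V (lshift n ord0) 0 = a by rewrite /V col_mxEu mxE.
have f2 : forall r, V (rshift 1 r) 0 = (r == i)%:R + b * (r == j)%:R by move=> r; rewrite /V col_mxEd mxE.
rewrite e1 f1.
under eq_bigr do rewrite e2 f2.
under [X in _ <= _ + _ + (X + _)]eq_bigr do rewrite e3 f2.
under [X in _ <= _ + _ + (_ + X)]eq_bigr do under eq_bigr do rewrite e4 !f2.
under eq_bigr do rewrite mulrC.
under [X in _ <= _ + _ + (X + _)]eq_bigr do rewrite -mulrA.
under [X in _ <= _ + _ + (_ + X)]eq_bigr do under eq_bigr do rewrite -mulrA [Y _ _ * _]mulrC.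
under [X in _ <= _ + _ + (_ + X)]eq_bigr do rewrite -mulr_sumr.
rewrite !sparse.
move=> h; nra.
Qed.



Lemma ell1 (z : {set 'I_n} -> R) (A : {set 'I_n}) (x : 'I_n) : x \notin A -> ell z A [set x] = z A - z (x |: A).
Proof.
move=> xA; have := @ell_rec R n z A set0 x xA; rewrite in_set0 setU0 !ell_base; exact.
Qed.

Lemma sub2 (i j : 'I_n) (J : {set 'I_n}) : i != j -> J \subset [set i; j] ->
  [\/ J = set0, J = [set i], J = [set j] | J = [set i; j]].
Proof.
move=> ij H.
have Hu : forall u, u \in J -> (u == i) || (u == j).
  by move=> u uJ; have := subsetP H u uJ; rewrite !inE.
have nj : forall u, u \in J -> j \notin J -> u == i.
  by move=> u uJ nJ; case/orP: (Hu u uJ) => // /eqP E; subst u; rewrite uJ in nJ.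
have ni : forall u, u \in J -> i \notin J -> u == j.
  by move=> u uJ nI; case/orP: (Hu u uJ) => // /eqP E; subst u; rewrite uJ in nI.
case Hi: (i \in J); case Hj: (j \in J).
- apply: Or44; apply/eqP; rewrite eqEsubset H /=; apply/subsetP => u.
  by rewrite !inE => /orP[] /eqP ->.
- apply: Or42; apply/eqP; rewrite eqEsubset sub1set Hi andbT; apply/subsetP => u uJ.
  by rewrite inE nj // Hj.
- apply: Or43; apply/eqP; rewrite eqEsubset sub1set Hj andbT; apply/subsetP => u uJ.
  by rewrite inE ni // Hi.
- apply: Or41; apply/setP => u; rewrite inE; apply/negbTE/negP => uJ.
  by have := nj u uJ; rewrite Hj => /(_ isT) /eqP E; subst u; rewrite uJ in Hi.
Qed.


Lemma sum2e (P : pred {set 'I_n}) (F : {set 'I_n} -> \bar R) (A B : {set 'I_n}) :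
  A != B -> (forall J, P J = (J == A) || (J == B)) -> (\sum_(J | P J) F J = F A + F B)%E.
Proof.
move=> AB HP; rewrite (eq_bigl _ _ HP) (bigD1 A) /= ?eqxx //; congr (_ + _)%E.
apply: big_pred1 => J /=; case: (J =P A) => [->|] /=; last by rewrite andbT.
by rewrite (negbTE AB).
Qed.

Lemma partI (x : 'cV[R]_n) (Y : 'M[R]_n) (i j : 'I_n) : i != j -> C_SDP_MC x Y ->
  S_set i [set i; j] x Y.
Proof.
move=> ij [[x01 Ysym Hpsd Ydiag] MC].
have Yji : Y j i = Y i j by rewrite -{1}Ysym mxE.
have [Y0 [Y1 [Y2 Y3]]] : [/\ 0 <= Y i j, x i 0 + x j 0 - 1 <= Y i j, Y i j <= x i 0 & Y i j <= x j 0].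
  case: (ltngtP i j) => h.
  - by have [? ? ? ?] := MC i j h.
  - have [? ? ? ?] := MC j i h; rewrite -Yji; split => //; lra.
  - by move: ij; rewrite (val_inj h) eqxx.
have ji : j != i by rewrite eq_sym.
have jni : j \notin [set i] by rewrite inE.
have inj : i \notin [set j] by rewrite inE.
have /andP[xi0 xi1] := x01 i.
have /andP[xj0 xj1] := x01 j.
split => //; exists (fun _ => 0); set z := zval x Y (fun _ => 0) => /=.
have z0 : z set0 = 1 by rewrite /z zval0.
have z1 : forall u, z [set u] = x u 0 by move=> u; rewrite /z zval1.
have z2 : z [set i; j] = Y i j by rewrite /z zval2.
have z2' : z (j |: [set i]) = Y i j by rewrite /z zval2.
have z2'' : z (i |: [set j]) = Y i j by rewrite /z zval2.
have z1' : forall u, z (u |: set0) = x u 0 by move=> u; rewrite setU0 z1.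
have DM0 : [set i; j] :\: set0 = [set i; j] by rewrite setD0.
have DMi : [set i; j] :\: [set i] = [set j].
  apply/setP => u; rewrite !inE; case: (u =P i) => [->|] //=; by rewrite (negbTE ij).
have DMj : [set i; j] :\: [set j] = [set i].
  apply/setP => u; rewrite !inE; case: (u =P j) => [->|] //=; rewrite ?(negbTE ji) ?orbF ?andbT //.
have DMM : [set i; j] :\: [set i; j] = set0 by rewrite setDv.
have pE : ell z set0 [set i; j] = 1 - x i 0 - x j 0 + Y i j.
  rewrite ell_rec ?in_set0 ?inE ?(negbTE ij) // !ell1 ?in_set0 ?inE ?(negbTE ji) //.
  rewrite !setU0 z0 !z1 z2'; ring.
have pI : ell z [set i] [set j] = x i 0 - Y i j by rewrite ell1 // z1 z2'.
have pJ : ell z [set j] [set i] = x j 0 - Y i j by rewrite ell1 // z1 z2''.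
have pIJ : ell z [set i; j] set0 = Y i j by rewrite ell_base z2.
have qI : ell z set0 [set j] = 1 - x j 0 by rewrite ell1 ?in_set0 // z0 z1'.
have qIJ : ell z [set j] set0 = x j 0 by rewrite ell_base z1.
have D1 : [set i] :\ i = set0 by apply/setP => u; rewrite !inE; case: (u =P i).
have D2 : [set i; j] :\ i = [set j] by rewrite setU1K.
split.
  move=> J /(sub2 ij) [] ->; rewrite ?DM0 ?DMi ?DMj ?DMM ?pE ?pI ?pJ ?pIJ; lra.
rewrite (sum2e _ (A := [set i]) (B := [set i; j])); last first.
- move=> J; rewrite powersetE; apply/idP/idP.
    case/andP => /(sub2 ij) [] -> //; rewrite ?inE ?eqxx ?(negbTE ji) ?orbT //.
    by rewrite (negbTE ij).
  case/orP => /eqP ->; rewrite ?sub1set ?subxx ?inE ?eqxx ?orbT //.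
- apply/negP => /eqP E; have : j \in [set i] by rewrite E !inE eqxx orbT.
  by rewrite inE (negbTE ji).
rewrite DMi DMM ?D1 ?D2 pI qI pIJ qIJ.
have base : x i 0 ^+ 2 <= Y i i.
  have := psd_use i j (- x i 0) 0 Hpsd; nra.
have [xj_0|xj_pos] := eqVneq (x j 0) 0.
  have Y00 : Y i j = 0 by lra.
  rewrite /persp xj_0 Y00 ltxx eqxx subr0 subr0 ltr01 /= divr1 adde0 lee_fin //.
have [xj_1|xj_lt1] := eqVneq (x j 0) 1.
  have Y0i : Y i j = x i 0 by lra.
  rewrite /persp xj_1 Y0i subrr ltxx eqxx ltr01 /= divr1 subrr eqxx /= add0e lee_fin //.
have xp : 0 < x j 0 by rewrite lt_neqAle eq_sym xj_pos.
have xq : 0 < 1 - x j 0 by rewrite subr_gt0 lt_neqAle xj_lt1.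
rewrite /persp xp xq -EFinD lee_fin.
set a := - (x i 0 - Y i j) / (1 - x j 0).
set b := (x j 0 * x i 0 - Y i j) / (x j 0 * (1 - x j 0)).
have key := psd_use i j a b Hpsd.
have Yjj := Ydiag j.
have hb : 0 <= b * b by rewrite -expr2 sqr_ge0.
have E : a * a + 2 * a * (x i 0 + b * x j 0) + 2 * b * Y i j + b * b * x j 0
  = - ((x i 0 - Y i j) ^+ 2 / (1 - x j 0) + Y i j ^+ 2 / x j 0).
  rewrite /a /b; field.
  by rewrite xj_pos /= subr_eq0 eq_sym xj_lt1.
rewrite Yji in key.
nra.
Qed.

End P1.

Unset Implicit Arguments.

Theorem proposition7 (R : realType) (n : nat) (e : rel 'I_n)
  (Lm Lp : {set 'I_n}) (i : 'I_n) (M : {set 'I_n}) :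
  symmetric e -> irreflexive e -> [disjoint Lm & Lp] ->
  i \in Lp -> M \subset nbhd e Lm Lp i -> i \in M ->
  (#|M| = 2%N -> forall x Y, C_SDP_MC x Y -> @S_set R n i M x Y) /\
  ((2 < #|M|)%N -> ~ (forall x Y, C_SDP_MC_Tri x Y -> @S_set R n i M x Y)).
Proof.
move=> _ _ _ _ _ iM; split.
  move=> /eqP /cards2P [a [b [ab ME]]] x Y hC.
  move: iM; rewrite ME => /set2P [] E; subst.
    exact: partI.
  rewrite setUC; apply: partI => //; by rewrite eq_sym.
move=> cM H.
have c1 : (1 < #|M :\ i|)%N by move: cM; rewrite (cardsD1 i M) iM add1n ltnS.
have [j jM] : exists j, j \in M :\ i by apply/set0Pn; rewrite -card_gt0 (ltn_trans _ c1).
have c2 : (0 < #|M :\ i :\ j|)%N by move: c1; rewrite (cardsD1 j (M :\ i)) jM add1n ltnS.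
have [k kM] : exists k, k \in M :\ i :\ j by apply/set0Pn; rewrite -card_gt0.
move: jM kM; rewrite !inE => /andP[ji jM] /andP[kj /andP[ki kM]].
have hij : i != j by rewrite eq_sym.
have hik : i != k by rewrite eq_sym.
have hjk : j != k by rewrite eq_sym.
apply: (@notS R n i j k hij hik hjk M iM jM kM).
exact: H (@Ctri R n i j k hij hik hjk).
Qed.
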